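(* Let $n\geqslant 3$. Any eigenfunction of the Star graph $S_n$ with eigenvalue $n-2$ can be uniquely reconstructed from its values on the second neighbourhood of any vertex: if $f,g$ are eigenfunctions of $S_n$ with eigenvalue $n-2$, $v$ is a vertex of $S_n$, and $f(x)=g(x)$ for every vertex $x$ at distance exactly $2$ from $v$, then $f=g$.
   Context: Write a permutation $\pi$ of $\{1,\ldots,n\}$ as the sequence $[\pi_1\ldots\pi_n]$. The Star graph $S_n$ has vertex set $\mathrm{Sym}_n$, and two permutations are adjacent iff one is obtained from the other by exchanging the entries in positions $1$ and $i$ for some $2\le i\le n$ (the Cayley graph of $\mathrm{Sym}_n$ generated by the transpositions $(1\ i)$, $2\le i\le n$). A function $f:\mathrm{Sym}_n\to\mathbb{R}$ is an eigenfunction with eigenvalue $\theta$ if $f\not\equiv 0$ and $\theta f(x)=\sum_{y\in N(x)}f(y)$ for every vertex $x$, where $N(x)$ is the neighbourhood of $x$. The second neighbourhood of a vertex $v$ is the set of vertices at distance exactly $2$ from $v$. *)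

(* Defs.v *)
From mathcomp Require Import all_boot all_order all_algebra all_fingroup.
From mathcomp Require Import all_classical all_reals.
Set Implicit Arguments. Unset Strict Implicit. Unset Printing Implicit Defensive.
Import GRing.Theory Num.Theory.
Local Open Scope ring_scope.

(* A permutation pi of {1..n} is modelled as pi : 'S_n = {perm 'I_n}, with
   pi i = entry in position i (positions 0-indexed: position 1 of the paper is 0).
   Exchanging the entries in positions 1 and i gives pi o (1 i); in MathComp
   (s * t) x = t (s x), so pi o tau = tau * pi. *)
Definition star_adj (n : nat) (x y : 'S_n) : Prop :=
  exists i j : 'I_n, nat_of_ord i = 0%N /\ i != j /\ y = (tperm i j * x)%g.

Definition star_eigenfunction (R : realType) (n : nat) (theta : R)
    (f : 'S_n -> R) : Prop :=
  (exists x, f x != 0) /\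
  forall x : 'S_n,
    theta * f x = \sum_(y : 'S_n | `[< star_adj x y >]) f y.

Definition star_dist2 (n : nat) (v x : 'S_n) : Prop :=
  x <> v /\ ~ star_adj v x /\ exists w, star_adj v w /\ star_adj w x.

(* Main.v *)
Require Import Defs.
From mathcomp Require Import all_boot all_order all_algebra all_fingroup.
From mathcomp Require Import all_classical all_reals.
From mathcomp Require Import ring lra zify.
Set Implicit Arguments. Unset Strict Implicit. Unset Printing Implicit Defensive.
Import GRing.Theory Num.Theory Order.TTheory.
Local Open Scope ring_scope.

Section Star.
Variable R : realType.
Variable n : nat.
Local Notation N := n.+1.
Implicit Types (P : {set 'I_N}) (i j p q a b : 'I_N) (h : 'S_N -> R) (x y z : 'S_N).

Definition tt (j : 'I_N) : 'S_N := tperm ord0 j.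

Lemma ttE j (x : 'S_N) p : (tt j * x)%g p = x (tperm ord0 j p).
Proof. by rewrite permM. Qed.

Definition Eig (h : 'S_N -> R) :=
  forall x, (N%:R - 2) * h x = \sum_(j | j != ord0) h (tt j * x)%g.

Definition agree (P : {set 'I_N}) (x y : 'S_N) := [forall p in P, y p == x p].

Lemma agreeP (P : {set 'I_N}) (x y : 'S_N) : reflect (forall p, p \in P -> y p = x p) (agree P x y).
Proof.
apply: (iffP forallP) => H p.
  by move=> pP; have := H p; rewrite pP /= => /eqP.
by apply/implyP => /H ->.
Qed.

Definition cs (h : 'S_N -> R) P x := \sum_(y | agree P x y) h y.

Lemma sum_tt (F : 'S_N -> R) j (P : pred 'S_N) :
  \sum_(y | P y) F (tt j * y)%g = \sum_(z | P (tt j * z)%g) F z.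
Proof.
rewrite (reindex_inj (mulgI (tt j))) /=.
apply: eq_big => [y|y _] /=.
by []. by rewrite /tt tpermKg.
Qed.

Lemma sum_constP (T : finType) (P : pred T) (c : R) :
  \sum_(j | P j) c = c *+ #|P|.
Proof. by rewrite -sumr_const; apply: eq_bigl. Qed.

Lemma card_neq0 : #|[pred j : 'I_N | j != ord0]| = n.
Proof. by rewrite cardC1 card_ord. Qed.

Lemma total0 h : Eig h -> \sum_x h x = 0.
Proof.
move=> E.
have : (N%:R - 2) * \sum_x h x = (N%:R - 1) * \sum_x h x.
  rewrite mulr_sumr (eq_bigr _ (fun x _ => E x)) exchange_big /=.
  rewrite (eq_bigr (fun _ => \sum_x h x)); last first.
    move=> j _; by rewrite [RHS](reindex_inj (mulgI (tt j))).
  rewrite sum_constP card_neq0 -[_ *+ n]mulr_natl.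
  by rewrite -[N%:R]natr1 addrK.
move=> H; have -> : \sum_x h x = (N%:R - 1) * \sum_x h x - (N%:R - 2) * \sum_x h x by ring.
by rewrite H subrr.
Qed.


Lemma agree_D1 P i (x z : 'S_N) : i \in P ->
  agree P x z = agree (P :\ i) x z && (z i == x i).
Proof.
move=> iP; apply/agreeP/andP => [H|[/agreeP H /eqP zi] p pP].
  split; last by rewrite H.
  by apply/agreeP => p; rewrite inE => /andP[_ /H].
have [->|pi] := eqVneq p i; first by [].
by apply: H; rewrite !inE pi.
Qed.

Lemma agree_tt_in P j (x y : 'S_N) : j \in P -> ord0 \in P ->
  agree P (tt j * x)%g (tt j * y)%g = agree P x y.
Proof.
move=> jP P0.
have key : forall x y : 'S_N, agree P x y -> agree P (tt j * x)%g (tt j * y)%g.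
  move=> x' y' /agreeP H; apply/agreeP => p pP; rewrite !ttE; apply: H.
  by case: tpermP => // ->.
apply/idP/idP; last exact: key.
by move/key; rewrite /tt !tpermKg.
Qed.

Lemma agree_tt_out P j (x z : 'S_N) : ord0 \in P -> j \notin P ->
  agree P x (tt j * z)%g = agree (P :\ ord0) x z && (z j == x ord0).
Proof.
move=> P0 jP; rewrite (agree_D1 _ _ P0) ttE tpermL; congr (_ && _).
apply/agreeP/agreeP => H p pP; move: (pP); rewrite !inE => /andP[p0 pPP].
  have jp : j != p by apply: contraNneq jP => ->.
  by rewrite -H // ttE tpermD // eq_sym.
have jp : j != p by apply: contraNneq jP => ->.
by rewrite ttE tpermD ?H // eq_sym.
Qed.

Lemma agree_tt_out2 P j (x z : 'S_N) : ord0 \notin P -> j \notin P ->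
  agree P x (tt j * z)%g = agree P x z.
Proof.
move=> P0 jP.
have p0 p : p \in P -> ord0 != p by move=> pP; apply: contraNneq P0 => ->.
have pj p : p \in P -> j != p by move=> pP; apply: contraNneq jP => ->.
by apply/agreeP/agreeP => H p pP; have := H p pP; rewrite ttE tpermD ?p0 ?pj.
Qed.

Lemma agree_tt_B P j (x z : 'S_N) : ord0 \notin P -> j \in P ->
  agree P x (tt j * z)%g = agree (ord0 |: P :\ j) (tt j * x)%g z.
Proof.
move=> P0 jP; apply/agreeP/agreeP => H p.
- rewrite !inE => /orP[/eqP->|/andP[pj pP]].
    by rewrite ttE tpermL -(H j jP) ttE tpermR.
  have p0 : p != ord0 by apply: contraNneq P0 => <-.
  by have := H p pP; rewrite !ttE tpermD // eq_sym.
- move=> pP; have [->|pj] := eqVneq p j.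
    by rewrite ttE tpermR H ?ttE ?tpermL // !inE eqxx.
  have p0 : p != ord0 by apply: contraNneq P0 => <-.
  rewrite ttE tpermD 1?eq_sym // H ?ttE ?tpermD 1?eq_sym //.
  by rewrite !inE pj pP orbT.
Qed.

Lemma lemA h P x : Eig h -> ord0 \in P ->
  (N%:R - 1) * cs h P x - \sum_(j | (j != ord0) && (j \in P)) cs h P (tt j * x)%g
  = cs h (P :\ ord0) x.
Proof.
move=> E P0.
have e1 : (N%:R - 2) * cs h P x =
    \sum_(j | j != ord0) \sum_(y | agree P x y) h (tt j * y)%g.
  by rewrite /cs mulr_sumr (eq_bigr _ (fun y _ => E y)) exchange_big.
rewrite (bigID (fun j => j \in P)) /= in e1.
have e2 : \sum_(j | (j != ord0) && (j \in P)) \sum_(y | agree P x y) h (tt j * y)%g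
   = \sum_(j | (j != ord0) && (j \in P)) cs h P (tt j * x)%g.
  apply: eq_bigr => j /andP[_ jP]; rewrite sum_tt /cs; apply: eq_bigl => z.
  by rewrite -(agree_tt_in _ _ jP P0) /tt tpermKg.
have e3 : \sum_(j | (j != ord0) && (j \notin P)) \sum_(y | agree P x y) h (tt j * y)%g
   = cs h (P :\ ord0) x - cs h P x.
  transitivity (\sum_(j | (j != ord0) && (j \notin P))
     \sum_(z | agree (P :\ ord0) x z) (if z j == x ord0 then h z else 0)).
    apply: eq_bigr => j /andP[_ jP]; rewrite sum_tt -big_mkcondr.
    by apply: eq_bigl => z; rewrite agree_tt_out.
  rewrite exchange_big /=.
  have -> : cs h (P :\ ord0) x = \sum_(z | agree (P :\ ord0) x z && (z ord0 == x ord0)) h z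
     + \sum_(z | agree (P :\ ord0) x z && ~~ (z ord0 == x ord0)) h z.
    by rewrite /cs (bigID (fun z : 'S_N => z ord0 == x ord0)).
  have -> : \sum_(i | agree (P :\ ord0) x i && (i ord0 == x ord0)) h i = cs h P x.
    by apply: eq_bigl => z; rewrite (agree_D1 _ _ P0).
  rewrite [cs h P x + _]addrC addrK [RHS]big_mkcondr; apply: eq_bigr => z /agreeP Az.
  rewrite -big_mkcondr.
  set i0 := (z^-1)%g (x ord0).
  have zi0 : z i0 = x ord0 by rewrite permKV.
  case: (boolP (z ord0 == x ord0)) => /= z0.
    rewrite big_pred0 // => j; apply/negbTE; rewrite -andbA; apply/and3P.
    by move=> [j0 _ /eqP]; rewrite -(eqP z0) => /perm_inj jz; rewrite jz eqxx in j0.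
  have i00 : i0 != ord0 by apply: contraNneq z0 => e; rewrite -zi0 e.
  have i0P : i0 \notin P.
    apply/negP => i0P; have := Az i0; rewrite !inE i00 i0P zi0 => /(_ isT) /perm_inj.
    by move/eqP; rewrite eq_sym (negbTE i00).
  rewrite (big_pred1 i0) // => j; apply/idP/eqP.
    by move=> /andP[_ /eqP]; rewrite -zi0 => /perm_inj.
  by move=> ->; rewrite i00 i0P zi0 eqxx.
rewrite e2 e3 in e1.
have -> : N%:R - 1 = (N%:R - 2) + 1 :> R by ring.
by rewrite mulrDl e1 mul1r; ring.
Qed.

Lemma lemB h P x : Eig h -> ord0 \notin P ->
  (#|P|%:R - 1) * cs h P x = \sum_(j in P) cs h (ord0 |: P :\ j) (tt j * x)%g.
Proof.
move=> E P0.
have e1 : (N%:R - 2) * cs h P x =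
    \sum_(j | j != ord0) \sum_(y | agree P x y) h (tt j * y)%g.
  by rewrite /cs mulr_sumr (eq_bigr _ (fun y _ => E y)) exchange_big.
rewrite (bigID (fun j => j \in P)) /= in e1.
have e2 : \sum_(j | (j != ord0) && (j \in P)) \sum_(y | agree P x y) h (tt j * y)%g
   = \sum_(j in P) cs h (ord0 |: P :\ j) (tt j * x)%g.
  rewrite [RHS](eq_bigl (fun j => (j != ord0) && (j \in P))); last first.
    move=> j; apply/idP/andP => [jP|[]//]; split => //.
    by apply: contraNneq P0 => <-.
  apply: eq_bigr => j /andP[_ jP]; rewrite sum_tt /cs; apply: eq_bigl => z.
  by rewrite agree_tt_B.
set K := #|[pred j : 'I_N | (j != ord0) && (j \notin P)]|.
have e3 : \sum_(j | (j != ord0) && (j \notin P)) \sum_(y | agree P x y) h (tt j * y)%g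
   = K%:R * cs h P x.
  transitivity (\sum_(j | (j != ord0) && (j \notin P)) cs h P x).
    apply: eq_bigr => j /andP[j0 jP]; rewrite sum_tt; apply: eq_bigl => z.
    by rewrite agree_tt_out2.
  by rewrite sum_constP mulr_natl.
have hK : (K + #|P|).+1 = N.
  have -> : K = #|~: (ord0 |: P)| by apply: eq_card => j; rewrite !inE negb_or.
  have hC := cardsC (ord0 |: P); have cN : #|'I_N| = N := card_ord N.
  rewrite cardsU1 P0 /= in hC.
  by transitivity #|'I_N|; [rewrite -hC add1n addSn addnC | exact: card_ord].
have hKr : (K%:R : R) = N%:R - 1 - #|P|%:R.
  have hKR : ((K + #|P|).+1)%:R = N%:R :> R by rewrite hK.
  rewrite -addn1 !natrD in hKR; lra.
rewrite e2 e3 hKr in e1.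
apply: (addIr ((N%:R - 1 - #|P|%:R) * cs h P x)); rewrite -e1; ring.
Qed.

Lemma maxp (psi : 'S_N -> R) P : ord0 \in P -> (#|P| < N)%N ->
  (forall x, (N%:R - 1) * psi x =
      \sum_(j | (j != ord0) && (j \in P)) psi (tt j * x)%g) ->
  forall x, psi x = 0.
Proof.
move=> P0 PN H.
have [i0 _ Hi0] := @eq_bigmax _ _ _ (0 : R) (1%g) predT (fun x => `|psi x|) isT
   (fun (k : 'S_N) _ => normr_ge0 _).
set M := \big[Order.max/0]_(k : 'S_N | predT k) `|psi k| in Hi0.
have le y : `|psi y| <= M by exact: (@le_bigmax_cond _ _ _ (0 : R) y predT (fun x => `|psi x|)).
have M0 : 0 <= M by rewrite Hi0.
set K := #|[pred j : 'I_N | (j != ord0) && (j \in P)]|.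
have hK : (K.+2 <= N)%N.
  have -> : K = #|P :\ ord0| by apply: eq_card => j; rewrite !inE.
  by move: PN; rewrite (cardsD1 ord0 P) P0.
have hKr : (K%:R : R) + 2 <= N%:R.
  have : (K.+2)%:R <= N%:R :> R by rewrite ler_nat.
  by rewrite -addn2 natrD.

have N1 : 1 <= (N%:R : R) by rewrite ler1n.
have ineq : (N%:R - 1) * M <= (N%:R - 2) * M.
  rewrite {1}Hi0 -[X in X * _]ger0_norm ?subr_ge0 // -normrM H.
  apply: le_trans (ler_norm_sum _ _ _) _.
  apply: le_trans (ler_sum _ (fun j _ => le (tt j * i0)%g)) _.
  rewrite sum_constP -[M *+ _]mulr_natl (_ : #|_| = K) //.
  apply: ler_wpM2r => //; lra.
have e : (N%:R - 1) * M = (N%:R - 2) * M + M by ring.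
rewrite e gerDl in ineq.
move=> x; apply/eqP; rewrite -normr_le0; apply: le_trans (le x) _.
by [].
Qed.

Lemma recz h : Eig h -> (forall q x, q != ord0 -> cs h [set q] x = 0) ->
  forall k P x, #|P| = k.+2 -> ord0 \in P -> (k.+2 < N)%N -> cs h P x = 0.
Proof.
move=> E H1; elim=> [|k IH] P x cP P0 PN.
  apply: (maxp (psi := cs h P) P0); first by rewrite cP.
  move=> y; apply/eqP; rewrite -subr_eq0 lemA //.
  have : #|P :\ ord0| == 1.
    apply/eqP; move: cP; rewrite (cardsD1 ord0 P) P0 /=. by rewrite add1n => -[].
  case/cards1P => q Pq; rewrite Pq H1 //.
  have : q \in P :\ ord0 by rewrite Pq set11.
  by rewrite !inE => /andP[].
apply: (maxp (psi := cs h P) P0); first by rewrite cP.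
move=> y; apply/eqP; rewrite -subr_eq0 lemA //.
have cQ : #|P :\ ord0| = k.+2 by move: cP; rewrite (cardsD1 ord0 P) P0 add1n => -[].
have Q0 : ord0 \notin P :\ ord0 by rewrite !inE eqxx.
have := lemB y E Q0.
rewrite big1; last first.
  move=> j jQ.
  have S0 : ord0 \in ord0 |: P :\ ord0 :\ j by rewrite setU11.
  apply: (IH _ _ _ S0); last by apply: ltnW.
  rewrite cardsU1 !inE eqxx /= andbF /= add1n.
  by move: cQ; rewrite (cardsD1 j (P :\ ord0)) jQ add1n => -[->].
move/eqP; rewrite mulf_eq0 cQ => /orP[|/eqP //].
by rewrite -natr1 addrK pnatr_eq0.
Qed.

Lemma zero_h h : Eig h -> (forall q x, q != ord0 -> cs h [set q] x = 0) ->
  (2 <= n)%N -> forall x, h x = 0.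
Proof.
move=> E H1 n2 x.
pose q : 'I_N := ord_max.
have Hqq : q != ord0.
  by rewrite -val_eqE /=; apply/eqP => e0; rewrite e0 in n2.
have -> : h x = cs h (~: [set q]) x.
  rewrite /cs (big_pred1 x) // => y; apply/idP/eqP => [/agreeP Hy|->]; last first.
    by apply/agreeP.
  have yq : y q = x q.
    set r := (y^-1)%g (x q).
    have yr : y r = x q by rewrite permKV.
    have [rq|rq] := eqVneq r q; first by rewrite -yr rq.
    have := Hy r; rewrite !inE rq => /(_ isT); rewrite yr => /perm_inj rq'.
    by rewrite rq' eqxx in rq.
  apply/permP => p; have [->|pq] := eqVneq p q; first by [].
  by apply: Hy; rewrite !inE.
have cP : #|~: [set q]| = (n - 2).+2.
  have := cardsC [set q]; rewrite cards1 card_ord; lia.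
apply: (recz E H1 x cP); first by rewrite !inE eq_sym Hqq.
have := cardsC [set q]; rewrite cards1 card_ord; lia.
Qed.

Definition m h p a := \sum_(y : 'S_N | y p == a) h y.

Lemma cs1 h q x : cs h [set q] x = m h q (x q).
Proof.
apply: eq_bigl => y; apply/agreeP/eqP => [H|H p]; first by apply: H; rewrite set11.
by rewrite inE => /eqP ->.
Qed.

Lemma rowsum h p : \sum_a m h p a = \sum_y h y.
Proof.
rewrite /m (eq_bigr (fun a => \sum_(y : 'S_N) (if y p == a then h y else 0))); last first.
  by move=> a _; rewrite big_mkcond.
rewrite exchange_big; apply: eq_bigr => y _.
by rewrite -big_mkcond (big_pred1 (y p)) // => a; rewrite eq_sym.
Qed.

Lemma colsum h a : \sum_p m h p a = \sum_y h y.
Proof.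
rewrite /m (eq_bigr (fun p => \sum_(y : 'S_N) (if y p == a then h y else 0))); last first.
  by move=> p _; rewrite big_mkcond.
rewrite exchange_big; apply: eq_bigr => y _.
rewrite -big_mkcond (big_pred1 ((y^-1)%g a)) // => p.
by apply/eqP/eqP => [<-|->]; rewrite ?permK ?permKV.
Qed.

Lemma m0 h a : Eig h -> (0 < n)%N -> m h ord0 a = 0.
Proof.
move=> E n0.
have := lemA (tperm ord0 a) E (set11 ord0).
rewrite big_pred0; last by move=> j; rewrite inE; case: (j == ord0).
rewrite finset.setDv cs1 tpermL subr0.
have -> : cs h finset.set0 (tperm ord0 a) = 0.
  rewrite -(total0 E); apply: eq_bigl => y; apply/agreeP => p; by rewrite inE.
move/eqP; rewrite mulf_eq0 => /orP[|/eqP //].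
rewrite -natr1 addrK pnatr_eq0 => /eqP n00; by rewrite n00 in n0.
Qed.

Lemma tsum (M : 'I_N -> 'I_N -> R) (y : 'S_N) j : j != ord0 ->
  \sum_p M p ((tt j * y)%g p) = \sum_p M p (y p) + M ord0 (y j) + M j (y ord0)
     - M ord0 (y ord0) - M j (y j).
Proof.
move=> j0.
rewrite [in LHS](bigD1 ord0) // [in LHS](bigD1 j) //= [in RHS](bigD1 ord0) //.
rewrite [in RHS](bigD1 j) //= !ttE tpermL tpermR.
rewrite (eq_bigr (fun p => M p (y p))); first by ring.
by move=> p /andP[pj p0]; rewrite ttE tpermD // eq_sym.
Qed.

Lemma card_rmul (Q : pred 'S_N) s : #|[pred x | Q (x * s)%g]| = #|Q|.
Proof.
rewrite -(fintype.card_image (mulIg s) [pred x | Q (x * s)%g]); apply: eq_card => y.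
apply/fintype.imageP/idP => [[x Hx ->]//|Qy]; exists (y * s^-1)%g; rewrite ?inE mulgKV //.
Qed.

Lemma tperm_eqR b q c : (tperm b q c == q) = (c == b).
Proof.
case: tpermP => [->|->|/eqP cb /eqP cq]; first by rewrite !eqxx.
  by rewrite eq_sym.
by rewrite (negbTE cq) (negbTE cb).
Qed.

Lemma card_fix1 q : #|[pred y : 'S_N | y q == q]| = n`!.
Proof.
transitivity #|perm_on [set~ q]|; last by rewrite card_perm cardsC1 card_ord.
apply: eq_card => y; rewrite inE; apply/eqP/idP => [yq|/fintype.subsetP H].
  apply/fintype.subsetP => z; rewrite !inE => yz; apply: contraNneq yz => ->; by rewrite yq.
apply/eqP; apply: contraT => yq; have := H q yq; by rewrite !inE eqxx.
Qed.

Lemma card_fix2 q p : p != q -> #|[pred y : 'S_N | (y q == q) && (y p == p)]| = n.-1`!.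
Proof.
move=> pq.
transitivity #|perm_on (~: [set q; p])|; last first.
  rewrite card_perm; congr (_ `!).
  have := cardsC [set q; p]; rewrite cards2 eq_sym pq card_ord; lia.
apply: eq_card => y; rewrite inE; apply/andP/idP => [[/eqP yq /eqP yp]|/fintype.subsetP H].
  apply/fintype.subsetP => z; rewrite !inE => yz; apply/orP => -[] /eqP zz; by rewrite zz ?yq ?yp eqxx in yz.
split; apply: contraT => yq; have := H _ yq; by rewrite !inE eqxx ?orbT.
Qed.

Lemma cnt q b p a : #|[pred x : 'S_N | (x q == b) && (x p == a)]| =
  if p == q then (if a == b then n`! else 0%N) else (if a == b then 0%N else n.-1`!).
Proof.
have [->|pq] := eqVneq p q.
  have [->|ab] := eqVneq a b.
    rewrite -(card_fix1 q) -(card_rmul [pred y : 'S_N | y q == q] (tperm b q)).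
    by apply: eq_card => x; rewrite !inE andbb permM tperm_eqR.
  apply: eq_card0 => x; rewrite !inE; apply/andP => -[/eqP -> /eqP ba].
  by rewrite ba eqxx in ab.
have [->|ab] := eqVneq a b.
  apply: eq_card0 => x; rewrite !inE; apply/andP => -[/eqP <- /eqP /perm_inj qp].
  by rewrite qp eqxx in pq.
set a' := tperm b q a.
have a'q : a' != q by rewrite tperm_eqR.
pose s := (tperm b q * tperm a' p)%g.
have sb : s b = q by rewrite permM tpermL tpermD // eq_sym.
have sa : s a = p by rewrite permM -/a' tpermL.
rewrite -(card_fix2 pq) -(card_rmul [pred y : 'S_N | (y q == q) && (y p == p)] s).
apply: eq_card => x; rewrite !inE !(permM x s).
apply/andP/andP => [[/eqP -> /eqP ->]|[/eqP h1 /eqP h2]]; first by rewrite sb sa.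
by split; apply/eqP; apply: (@perm_inj _ s); rewrite ?h1 ?h2 ?sa ?sb.
Qed.

Lemma sum_others (F : 'I_N -> R) i : \sum_j F j = 0 -> \sum_(j | j != i) F j = - F i.
Proof.
by rewrite (bigD1 i) //= => /eqP; rewrite addrC addr_eq0 => /eqP.
Qed.

Lemma margG (M : 'I_N -> 'I_N -> R) q b :
  (forall p, \sum_a M p a = 0) -> (forall a, \sum_p M p a = 0) ->
  \sum_(x : 'S_N | x q == b) \sum_p M p (x p) = (n`!%:R + n.-1`!%:R) * M q b.
Proof.
move=> Hr Hc.
rewrite exchange_big /=.
have inner p : \sum_(x : 'S_N | x q == b) M p (x p) = \sum_a M p a *
   (if p == q then (if a == b then n`! else 0%N) else (if a == b then 0%N else n.-1`!))%:R.
  rewrite (eq_bigr (fun x => \sum_a (if x p == a then M p a else 0))); last first.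
    by move=> x _; rewrite -big_mkcond (big_pred1 (x p)) // => a; rewrite eq_sym.
  rewrite exchange_big /=; apply: eq_bigr => a _.
  by rewrite -big_mkcondr sum_constP mulr_natr -(cnt q b p a).
rewrite (eq_bigr _ (fun p _ => inner p)) (bigD1 q) //= eqxx.
rewrite (bigD1 b) //= eqxx big1 ?addr0; last by move=> a ab; rewrite (negbTE ab) mulr0.
rewrite (eq_bigr (fun p => - M p b * n.-1`!%:R)); last first.
  move=> p pq; rewrite (negbTE pq) (bigD1 b) //= eqxx mulr0 add0r.
  rewrite (eq_bigr (fun a => M p a * n.-1`!%:R)); last first.
    by move=> a ab; rewrite (negbTE ab).
  by rewrite -mulr_suml sum_others.
rewrite -mulr_suml sumrN sum_others //; ring.
Qed.

Lemma h_form h : Eig h -> (2 <= n)%N ->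
  forall x, h x = \sum_p (m h p (x p) / (n`!%:R + n.-1`!%:R)).
Proof.
move=> E n2.
set D : R := n`!%:R + n.-1`!%:R.
have D0 : D != 0.
  have : 0 < n`!%:R :> R by rewrite ltr0n fact_gt0.
  have : 0 <= n.-1`!%:R :> R by rewrite ler0n.
  rewrite /D; lra.
pose M p a := m h p a / D.
pose G x := \sum_p M p (x p).
have Hr p : \sum_a M p a = 0 by rewrite -mulr_suml rowsum total0 // mul0r.
have Hc a : \sum_p M p a = 0 by rewrite -mulr_suml colsum total0 // mul0r.
have M0 a : M ord0 a = 0 by rewrite /M m0 ?mul0r //; apply: leq_trans n2.
have EG : Eig G.
  move=> x.
  rewrite (eq_bigr (fun j => G x + M j (x ord0) - M j (x j))); last first.
    by move=> j j0; rewrite /G tsum // !M0; ring.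
  rewrite !big_split /= sumrN sum_constP card_neq0 sum_others //.
  have -> : \sum_(j | j != ord0) M j (x j) = G x.
    by rewrite /G [in RHS](bigD1 ord0) //= M0 add0r.
  rewrite M0 oppr0 addr0 -mulr_natr -[N%:R]natr1; ring.
have mG q b : \sum_(x : 'S_N | x q == b) G x = m h q b.
  by rewrite /G margG // /M -/D mulrC divfK.
pose d x := h x - G x.
have Ed : Eig d.
  move=> x; rewrite /d mulrBr E EG -sumrB //.
have zd := zero_h Ed.
move=> x; apply/eqP; rewrite -subr_eq0; apply/eqP; apply: (zd _ n2) => q y q0.
rewrite cs1 /m /d sumrB mG /m subrr //.
Qed.

Lemma Vzero (M : 'I_N -> 'I_N -> R) (v : 'S_N) :
  let H := fun x : 'S_N => \sum_p M p (x p) in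
  H v = 0 -> (forall j, j != ord0 -> H (tt j * v)%g = 0) ->
  (forall j k, j != ord0 -> k != ord0 -> j != k -> H (tt k * (tt j * v))%g = 0) ->
  forall x, H x = 0.
Proof.
move=> H Hv H1 H2.
have key p b : M p (v b) - M p (v p) = M ord0 (v b) - M ord0 (v p).
  have [->|p0] := eqVneq p ord0; first by [].
  have [->|bp] := eqVneq b p; first by rewrite !subrr.
  have [->|b0] := eqVneq b ord0.
    have := H1 p p0; rewrite /H tsum // -/(H v) Hv => e.
    apply/eqP; rewrite -subr_eq0; apply/eqP; rewrite -e; ring.
  have := H2 b p b0 p0 bp.
  have yp : (tt b * v)%g p = v p by rewrite ttE tpermD // eq_sym.
  have y0 : (tt b * v)%g ord0 = v b by rewrite ttE tpermL.
  rewrite /H tsum // -/(H (tt b * v)%g) H1 // yp y0 => e.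
  apply/eqP; rewrite -subr_eq0; apply/eqP; rewrite -e; ring.
have rx (y : 'S_N) : \sum_p M ord0 (y p) = \sum_p M ord0 p.
  by rewrite [RHS](reindex_inj (@perm_inj _ y)).
move=> x; have -> : H x = H x - H v by rewrite Hv subr0.
rewrite /H -sumrB.
rewrite (eq_bigr (fun p => M ord0 (x p) - M ord0 (v p))); last first.
  move=> p _; have := key p ((v^-1)%g (x p)); rewrite permKV => ->; by [].
by rewrite sumrB !rx subrr.
Qed.

Lemma star_adjE x y : star_adj x y <-> exists2 j, j != ord0 & y = (tt j * x)%g.
Proof.
split => [[i [j [i0 [ij ->]]]]|[j j0 ->]].
  have -> : i = ord0 by apply: val_inj.
  exists j => //; by rewrite eq_sym -(_ : i = ord0) //; apply: val_inj.
by exists ord0, j; rewrite eq_sym.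
Qed.

Lemma star_sum (F : 'S_N -> R) x :
  \sum_(y | `[< star_adj x y >]) F y = \sum_(j | j != ord0) F (tt j * x)%g.
Proof.
have inj : {in [set j : 'I_N | j != ord0] &, injective (fun j => tt j * x)%g}.
  move=> j k _ _ /mulIg /(congr1 (fun s : 'S_N => s ord0)); by rewrite /tt !tpermL.
rewrite [RHS](eq_bigl (fun j => j \in [set j : 'I_N | j != ord0])); last by move=> j; rewrite inE.
rewrite -(big_imset _ inj); apply: eq_bigl => y.
apply/asboolP/finset.imsetP => [/star_adjE [j j0 ->]|[j]]; first by exists j; rewrite ?inE.
by rewrite inE => j0 ->; apply/star_adjE; exists j.
Qed.

Lemma dist2 v j k : j != ord0 -> k != ord0 -> j != k ->
  star_dist2 v (tt k * (tt j * v))%g.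
Proof.
move=> j0 k0 jk.
have w0 : (tt k * (tt j * v))%g ord0 = v k by rewrite !ttE tpermL tpermD // eq_sym.
split.
  move=> e; have := w0; rewrite e => /perm_inj e'; by rewrite e' eqxx in k0.
split.
  move=> /star_adjE [i i0 e]; have := w0; rewrite e ttE tpermL => /perm_inj ik.
  move: e; rewrite ik => /mulgI /(congr1 (fun s : 'S_N => s j)).
  rewrite !ttE tpermR => /perm_inj e; by rewrite e eqxx in j0.
exists (tt j * v)%g; split; apply/star_adjE; by [exists j | exists k].
Qed.

Lemma sq_ne k : (k%:R - 1) * (k%:R - 1) - k%:R != 0 :> R.
Proof.
case: k => [|k]; first by rewrite (_ : (0%:R - 1) * (0%:R - 1) - 0%:R = 1 :> R) ?oner_eq0 //; ring.
rewrite -natr1 (_ : k%:R + 1 - 1 = k%:R :> R); last by ring.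
rewrite -natrM subr_eq0 natr1 eqr_nat.
case: k => [|[|k]] //; rewrite !mulSn !mulnS; apply/negP => /eqP; lia.
Qed.

Lemma main_sec h v : (2 <= n)%N -> Eig h ->
  (forall j k, j != ord0 -> k != ord0 -> j != k -> h (tt k * (tt j * v))%g = 0) ->
  forall x, h x = 0.
Proof.
move=> n2 E H2.
set th : R := N%:R - 2.
have th0 : th != 0.
  have : 2 <= n%:R :> R by rewrite ler_nat.
  rewrite /th -natr1; lra.
have H1 j : j != ord0 -> th * h (tt j * v)%g = h v.
  move=> j0; rewrite E (bigD1 j) //= /tt tpermKg big1 ?addr0 // => i /andP[i0 ij].
  by apply: H2; rewrite // eq_sym.
have Hv : h v = 0.
  have e := E v.
  have : th * (th * h v) = n%:R * h v.
    rewrite e mulr_sumr (eq_bigr (fun _ => h v)); last by move=> j j0; rewrite H1.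
    by rewrite sum_constP card_neq0 mulr_natl.
  move/eqP; rewrite mulrA -subr_eq0 -mulrBl mulf_eq0 => /orP[|/eqP //].
  rewrite (_ : th = n%:R - 1); last by rewrite /th -natr1; ring.
  by rewrite (negbTE (sq_ne n)).
have H1' j : j != ord0 -> h (tt j * v)%g = 0.
  by move=> j0; have := H1 j j0; rewrite Hv => /eqP; rewrite mulf_eq0 (negbTE th0) => /eqP.
move=> x; rewrite (h_form E n2).
pose M p a := m h p a / (n`!%:R + n.-1`!%:R).
apply: (Vzero (M := M) (v := v)) => /=.
- by rewrite -(h_form E n2).
- by move=> j j0; rewrite -(h_form E n2) H1'.
- by move=> j k j0 k0 jk; rewrite -(h_form E n2) H2.
Qed.

End Star.

Local Open Scope ring_scope.
Theorem theorem2 (R : realType) (n : nat) (hn : (3 <= n)%N)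
    (f g : 'S_n -> R) (v : 'S_n) :
  star_eigenfunction (n%:R - 2) f ->
  star_eigenfunction (n%:R - 2) g ->
  (forall x : 'S_n, star_dist2 v x -> f x = g x) ->
  f = g.
Proof.
case: n hn f g v => [|[|[|n]]] // hn f g v [_ Ef] [_ Eg] Hfg.
pose h x := f x - g x.
have E : Eig h.
  move=> x; rewrite /h mulrBr Ef Eg !star_sum -sumrB //.
apply/funext => x; apply/eqP; rewrite -subr_eq0; apply/eqP.
apply: (main_sec (h := h) (v := v)) => // j k j0 k0 jk.
by rewrite /h Hfg ?subrr //; apply: dist2.
Qed.
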